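(* Assume $t_m=1$ and let $d_\beta^*(1)=(t_1t_2\cdots t_{m-1}0)^\omega$. Let $y\in\mathbb Z_\beta^+$ have β-expansion $y_ny_{n-1}\cdots y_0\bullet$, and let $k$ be the maximal index (with $0\le k\le n+1$) such that the word $y_{k-1}y_{k-2}\cdots y_0$ is a prefix of $d_\beta^*(1)$ (the empty word when $k=0$). Then ${\rm succ}(y)=y+T_\beta^{k'}(1)$, where $k'\in\{0,1,\dots,m-1\}$ satisfies $k'\equiv k\pmod m$.
   Context: $\beta>1$ is a simple Parry number with $d_\beta(1)=t_1\cdots t_{m-1}t_m$ ($m\ge2$, $t_1\ge1$, $t_m\ge1$, satisfying the Parry condition). The β-expansion of $x>0$ is the greedy expansion $x=\sum_{i\le k}x_i\beta^i$; we write $x=x_n\cdots x_0\bullet$ when $x_i=0$ for $i<0$, and such $x$ (together with $0$) form $\mathbb Z_\beta^+$. A finite string $x_k\cdots x_0$ over $\{0,\dots,\lceil\beta\rceil-1\}$ is the β-expansion of a β-integer iff each suffix $x_i\cdots x_0$ is lexicographically strictly smaller than $d_\beta(1)$. $\mathbb Z_\beta=\mathbb Z_\beta^+\cup(-\mathbb Z_\beta^+)$, ${\rm succ}(x)=\min\{y\in\mathbb Z_\beta: y>x\}$. $T_\beta(x)=\beta x\bmod1$ and $T_\beta^i(1)=\sum_{j=i+1}^m t_j\beta^{i-j}$ for $0\le i\le m-1$. *)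

(* Defs.v *)
From Stdlib Require Import Reals Lra Lia ZArith.
Open Scope R_scope.

Definition Tb (beta x : R) : R := beta * x - IZR (Int_part (beta * x)).

(* d_beta(1) = t_1 ... t_m (Renyi expansion of 1, finite of length m):
   t_i = floor(beta * T^{i-1}(1)) for 1 <= i <= m, and T^m(1) = 0. *)
Definition renyi_one (beta : R) (m : nat) (t : nat -> nat) : Prop :=
  (forall i : nat, (1 <= i <= m)%nat ->
     Z.of_nat (t i) = Int_part (beta * Nat.iter (i - 1) (Tb beta) 1)) /\
  Nat.iter m (Tb beta) 1 = 0.

(* [beta_int_expansion beta x L ys]: x >= 0 has greedy beta-expansion
   ys_(L-1) ... ys_0 . (no digits at negative indices, no leading zeros;
   L = 0 is the empty expansion of x = 0).  For x > 0 with
   beta^(L-1) <= x < beta^L, the greedy digits are the Renyi digits of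
   z = x / beta^L, and x is a beta-integer iff T^L(z) = 0. *)
Definition beta_int_expansion (beta x : R) (L : nat) (ys : nat -> nat) : Prop :=
  (L = 0%nat /\ x = 0) \/
  ((0 < L)%nat /\ beta ^ (L - 1) <= x < beta ^ L /\
   (forall i : nat, (i < L)%nat ->
      Z.of_nat (ys i) = Int_part (beta * Nat.iter (L - 1 - i) (Tb beta) (x / beta ^ L))) /\
   Nat.iter L (Tb beta) (x / beta ^ L) = 0).

Definition in_Zbeta_plus (beta x : R) : Prop :=
  exists (L : nat) (ys : nat -> nat), beta_int_expansion beta x L ys.

Definition in_Zbeta (beta x : R) : Prop :=
  in_Zbeta_plus beta x \/ in_Zbeta_plus beta (- x).

Definition is_succ (beta x s : R) : Prop :=
  in_Zbeta beta s /\ x < s /\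
  (forall z : R, in_Zbeta beta z -> x < z -> s <= z).

(* d_beta^*(1) = (t_1 ... t_(m-1) 0)^omega, indexed from 1. *)
Definition dstar (m : nat) (t : nat -> nat) (j : nat) : nat :=
  if (Nat.modulo j m =? 0)%nat then 0%nat else t (Nat.modulo j m).

Definition suffix_is_dstar_prefix (m : nat) (t : nat -> nat) (ys : nat -> nat) (k : nat) : Prop :=
  forall j : nat, (1 <= j <= k)%nat -> ys (k - j)%nat = dstar m t j.

(* Main.v *)
Require Import Defs.
From Stdlib Require Import Reals Lra Lia ZArith Classical.
Open Scope R_scope.

Lemma Rdiv_le_0_compat x y : 0 <= x -> 0 < y -> 0 <= x / y.
Proof. intros. unfold Rdiv. apply Rle_mult_inv_pos; auto. Qed.

Lemma Int_part_unique r z : IZR z <= r < IZR z + 1 -> Int_part r = z.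
Proof.
  intros [H1 H2]. unfold Int_part.
  assert (E : (z + 1)%Z = up r).
  { apply tech_up; rewrite plus_IZR; lra. }
  lia.
Qed.

Lemma Int_part_ge0 r : 0 <= r -> (0 <= Int_part r)%Z.
Proof.
  intros H. destruct (base_Int_part r) as [_ H2].
  assert (IZR (Int_part r) > -1) by lra.
  apply lt_IZR in H0. lia.
Qed.

Lemma Int_part_mono r s : r <= s -> (Int_part r <= Int_part s)%Z.
Proof.
  intros H. destruct (base_Int_part r) as [A1 A2].
  destruct (base_Int_part s) as [B1 B2].
  destruct (Z_le_gt_dec (Int_part r) (Int_part s)) as [|G]; auto.
  assert (Int_part s + 1 <= Int_part r)%Z by lia.
  apply IZR_le in H0. rewrite plus_IZR in H0. lra.
Qed.

Lemma Tb_range b x : 0 <= Tb b x < 1.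
Proof. unfold Tb. destruct (base_Int_part (b*x)). lra. Qed.

Lemma Tb_eq b x n s : b * x = IZR n + s -> 0 <= s < 1 -> Tb b x = s.
Proof.
  intros H Hs. unfold Tb. rewrite (Int_part_unique (b*x) n); lra.
Qed.

Lemma Tb_small b x : 0 <= b * x < 1 -> Tb b x = b * x.
Proof. intros H. apply (Tb_eq b x 0%Z); simpl; lra. Qed.

Lemma Tb_0 b : Tb b 0 = 0.
Proof. apply (Tb_eq b 0 0%Z); simpl; lra. Qed.

Lemma Tb_le b x : 0 <= b * x -> Tb b x <= b * x.
Proof.
  intros H. unfold Tb. pose proof (Int_part_ge0 _ H). apply IZR_le in H0. lra.
Qed.

Lemma iter_T0 b n : Nat.iter n (Tb b) 0 = 0.
Proof. induction n; simpl; auto. rewrite IHn. apply Tb_0. Qed.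

Definition Fr b N x := Nat.iter N (Tb b) (x / b ^ N).

Lemma Fr_S b N x : 1 < b -> 0 <= x < b ^ N -> Fr b (S N) x = Fr b N x.
Proof.
  intros Hb Hx. unfold Fr.
  change (Nat.iter (S N) (Tb b) (x / b ^ S N)) with (Tb b (Nat.iter N (Tb b) (x / b ^ S N))).
  rewrite <- Nat.iter_swap. f_equal.
  assert (HN : 0 < b ^ N) by (apply pow_lt; lra).
  rewrite Tb_small; simpl.
  - field. split; lra.
  - replace (b * (x / (b * b ^ N))) with (x / b ^ N) by (field; split; lra).
    split. apply Rdiv_le_0_compat; lra.
    apply (Rmult_lt_reg_r (b^N)); auto. unfold Rdiv. rewrite Rmult_assoc, Rinv_l; lra.
Qed.

Lemma Fr_ge b d N x : 1 < b -> 0 <= x < b ^ N -> Fr b (d + N) x = Fr b N x.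
Proof.
  intros Hb Hx. induction d; simpl; auto.
  rewrite Fr_S; auto. split; try lra.
  apply Rlt_le_trans with (b ^ N); try lra. apply Rle_pow; lia || lra.
Qed.

Lemma bernoulli b n : 1 < b -> 1 + INR n * (b - 1) <= b ^ n.
Proof.
  intros Hb. induction n. simpl. lra.
  rewrite S_INR. change (b ^ S n) with (b * b ^ n). assert (0 <= INR n) by apply pos_INR.
  assert (0 <= INR n * (b-1) * (b-1)) by (apply Rmult_le_pos; [apply Rmult_le_pos|]; lra).
  assert (b * (1 + INR n * (b - 1)) <= b * b ^ n) by (apply Rmult_le_compat_l; lra).
  nra.
Qed.

Definition Nof b x := Z.to_nat (up (x / (b - 1))).

Lemma Nof_spec b x : 1 < b -> x < b ^ Nof b x.
Proof.
  intros Hb. pose proof (bernoulli b (Nof b x) Hb).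
  assert (IZR (up (x / (b-1))) <= INR (Nof b x)).
  { unfold Nof. destruct (Z_le_gt_dec 0 (up (x/(b-1)))).
    - rewrite INR_IZR_INZ, Z2Nat.id by lia; lra.
    - destruct (up (x / (b-1))); try lia; simpl; apply IZR_le; lia. }
  destruct (archimed (x / (b-1))) as [A _].
  assert (x / (b-1) * (b - 1) = x) by (field; lra).
  assert (x/(b-1)*(b-1) < INR (Nof b x) * (b-1)) by (apply Rmult_lt_compat_r; lra).
  lra.
Qed.

Definition F b x := Fr b (Nof b x) x.

Lemma F_Fr b N x : 1 < b -> 0 <= x < b ^ N -> F b x = Fr b N x.
Proof.
  intros Hb Hx. unfold F.
  assert (Hx' : 0 <= x < b ^ Nof b x) by (split; [lra | apply Nof_spec; auto]).
  rewrite <- (Fr_ge b (N - Nof b x) _ _ Hb Hx').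
  rewrite <- (Fr_ge b (Nof b x - N) _ _ Hb Hx).
  f_equal. lia.
Qed.

Lemma F_small b x : 1 < b -> 0 <= x < 1 -> F b x = x.
Proof.
  intros Hb Hx. rewrite (F_Fr b 0); simpl; auto. unfold Fr. simpl. field.
Qed.

Lemma F_rec b x : 1 < b -> 0 <= x -> F b x = Tb b (F b (x / b)).
Proof.
  intros Hb Hx. set (N0 := Nof b (x / b)).
  assert (H0 : x / b < b ^ N0) by apply Nof_spec, Hb.
  assert (HN : 0 < b ^ N0) by (apply pow_lt; lra).
  rewrite (F_Fr b (S N0) x Hb).
  - rewrite (F_Fr b N0 (x / b) Hb).
    + unfold Fr. simpl. rewrite <- Nat.iter_swap. rewrite Nat.iter_swap. f_equal. f_equal.
      field. split; lra.
    + split; auto. apply Rdiv_le_0_compat; lra.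
  - split; auto. simpl.
    apply (Rmult_lt_reg_r (/ b)). apply Rinv_0_lt_compat; lra.
    replace (b * b ^ N0 * / b) with (b ^ N0) by (field; lra). exact H0.
Qed.

Lemma F_range b x : 1 < b -> 0 <= x -> 0 <= F b x < 1.
Proof. intros. rewrite F_rec; auto. apply Tb_range. Qed.

Lemma ind_pow b (P : R -> Prop) : 1 < b ->
  (forall x, 0 <= x < 1 -> P x) ->
  (forall x, 1 <= x -> P (x / b) -> P x) ->
  forall x, 0 <= x -> P x.
Proof.
  intros Hb H0 HS x Hx.
  assert (forall N x, 0 <= x < b ^ N -> P x).
  { induction N; intros y Hy; simpl in Hy.
    - apply H0; lra.
    - destruct (Rlt_le_dec y 1). apply H0; lra.
      apply HS; auto. apply IHN. split. apply Rdiv_le_0_compat; lra.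
      apply (Rmult_lt_reg_r b). lra. unfold Rdiv. rewrite Rmult_assoc, Rinv_l; lra. }
  apply (H (Nof b x)). split; auto. apply Nof_spec; auto.
Qed.

Lemma F_le b x : 1 < b -> 0 <= x -> F b x <= x.
Proof.
  intros Hb. apply (ind_pow b (fun x => F b x <= x)); auto.
  - intros y Hy. rewrite F_small; lra.
  - intros y Hy IH. rewrite F_rec; try lra.
    pose proof (F_range b (y / b) Hb).
    assert (0 <= y / b) by (apply Rdiv_le_0_compat; lra).
    eapply Rle_trans. apply Tb_le. nra.
    replace y with (b * (y / b)) at 2 by (field; lra). nra.
Qed.

Lemma F_sub b x e : 1 < b -> 0 <= x -> 0 <= e <= F b x -> F b (x - e) = F b x - e.
Proof.
  intros Hb Hx. revert e.
  apply (ind_pow b (fun x => forall e, 0 <= e <= F b x -> F b (x - e) = F b x - e)); auto.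
  - intros y Hy e He. rewrite F_small in He by auto. rewrite !F_small; auto; lra.
  - intros y Hy IH e He.
    assert (Hy0 : 0 <= y / b) by (apply Rdiv_le_0_compat; lra).
    pose proof (F_range b (y / b) Hb Hy0) as Hu.
    set (u := F b (y / b)) in *.
    assert (Hfy : F b y = b * u - IZR (Int_part (b * u))) by (rewrite F_rec by lra; reflexivity).
    pose proof (Int_part_ge0 (b * u)) as Hn. assert (0 <= b * u) by nra.
    specialize (Hn H). apply IZR_le in Hn.
    assert (Hle : F b y <= y) by (apply F_le; lra).
    assert (IH' : F b (y / b - e / b) = u - e / b).
    { apply IH. split. apply Rdiv_le_0_compat; lra.
      apply (Rmult_le_reg_l b). lra. replace (b * (e / b)) with e by (field; lra). lra. }
    rewrite F_rec by lra.
    replace ((y - e) / b) with (y / b - e / b) by (field; lra).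
    rewrite IH'. apply (Tb_eq b _ (Int_part (b * u))).
    + replace (b * (u - e / b)) with (b * u - e) by (field; lra). lra.
    + rewrite Hfy. rewrite Hfy in He. pose proof (Tb_range b u). unfold Tb in H0. lra.
Qed.

Definition c b j := Nat.iter j (Tb b) 1.

Lemma c_floor b m t : renyi_one b m t -> forall i, (1 <= i <= m)%nat ->
  Int_part (b * c b (i - 1)) = Z.of_nat (t i).
Proof. intros [H1 _] i Hi. unfold c. rewrite H1; auto. Qed.

Lemma c_rel b m t : renyi_one b m t -> forall i, (1 <= i <= m)%nat ->
  b * c b (i - 1) = INR (t i) + c b i.
Proof.
  intros H i Hi. pose proof (c_floor b m t H i Hi).
  destruct i as [|i]; [lia|].
  replace (S i - 1)%nat with i in * by lia.
  change (c b (S i)) with (Tb b (c b i)). unfold Tb. rewrite H0, INR_IZR_INZ. lra.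
Qed.

Lemma c_range b i : (1 <= i)%nat -> 0 <= c b i < 1.
Proof. intros. destruct i; [lia|]. apply Tb_range. Qed.

Lemma c_pos b m t : renyi_one b m t -> t m = 1%nat -> (1 <= m)%nat ->
  forall i, (i < m)%nat -> 0 < c b i.
Proof.
  intros H Htm Hm i Hi. destruct i as [|i]. simpl; lra.
  pose proof (c_range b (S i)) as Hr. destruct (Rlt_le_dec 0 (c b (S i))); auto.
  assert (E : c b (S i) = 0) by (specialize (Hr ltac:(lia)); lra).
  exfalso.
  assert (E2 : c b (m - 1) = 0).
  { unfold c in *. replace (m - 1)%nat with ((m - 1 - S i) + S i)%nat by lia.
    rewrite Nat.iter_add, E. apply iter_T0. }
  pose proof (c_floor b m t H m ltac:(lia)). rewrite E2, Rmult_0_r in H0.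
  rewrite (Int_part_unique 0 0) in H0 by (simpl; lra). rewrite Htm in H0. simpl in H0. lia.
Qed.

Definition Gap b Y cc := (forall s, 0 <= s < cc -> F b (Y + s) = s) /\ F b (Y + cc) = 0.

Lemma Gap0 b : 1 < b -> Gap b 0 1.
Proof.
  intros Hb. unfold Gap; split.
  - intros s Hs. rewrite Rplus_0_l. apply F_small; lra.
  - rewrite Rplus_0_l, F_rec by lra.
    assert (H1 : 0 <= 1 / b < 1).
    { split. apply Rdiv_le_0_compat; lra.
      apply (Rmult_lt_reg_l b); try lra. replace (b * (1 / b)) with 1 by (field; lra). lra. }
    rewrite (F_small b (1 / b) Hb H1).
    apply (Tb_eq b _ 1%Z); simpl. field; lra. lra.
Qed.

Lemma F_shift b Y' a s : 1 < b -> 0 <= Y' -> 0 <= s ->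
  F b (b * Y' + INR a + s) = Tb b (F b (Y' + (INR a + s) / b)).
Proof.
  intros Hb HY Hs. pose proof (pos_INR a).
  rewrite F_rec by nra. f_equal. f_equal. field. lra.
Qed.

Lemma step_lt b Y' cj a s : 1 < b -> 0 <= Y' -> Gap b Y' cj -> 0 <= s -> s < 1 ->
  INR a + s < b * cj -> F b (b * Y' + INR a + s) = s.
Proof.
  intros Hb HY [G1 G2] Hs Hs1 Hlt. pose proof (pos_INR a).
  rewrite F_shift by auto. rewrite G1.
  - apply (Tb_eq b _ (Z.of_nat a)); [|lra]. rewrite <- INR_IZR_INZ. field. lra.
  - split. apply Rdiv_le_0_compat; lra.
    apply (Rmult_lt_reg_l b); try lra. replace (b * ((INR a + s) / b)) with (INR a + s) by (field; lra). lra.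
Qed.

Lemma step_eq b Y' cj a s : 1 < b -> 0 <= Y' -> Gap b Y' cj -> 0 <= s ->
  INR a + s = b * cj -> F b (b * Y' + INR a + s) = 0.
Proof.
  intros Hb HY [G1 G2] Hs Heq.
  rewrite F_shift by auto. replace ((INR a + s) / b) with cj by (rewrite Heq; field; lra).
  rewrite G2. apply Tb_0.
Qed.

Lemma step_int b Y' cj a : 1 < b -> 0 <= Y' -> Gap b Y' cj ->
  INR a + 1 < b * cj -> F b (b * Y' + INR a + 1) = 0.
Proof.
  intros Hb HY [G1 G2] Hlt. pose proof (pos_INR a).
  rewrite F_shift by lra. rewrite G1.
  - apply (Tb_eq b _ (Z.of_nat a + 1)); [|lra]. rewrite plus_IZR, <- INR_IZR_INZ. field. lra.
  - split. apply Rdiv_le_0_compat; lra.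
    apply (Rmult_lt_reg_l b); try lra. replace (b * ((INR a + 1) / b)) with (INR a + 1) by (field; lra). lra.
Qed.

Lemma stepA b Y' cj a c' : 1 < b -> 0 <= Y' -> Gap b Y' cj ->
  b * cj = INR a + c' -> 0 < c' < 1 -> Gap b (b * Y' + INR a) c'.
Proof.
  intros Hb HY G Hrel Hc. unfold Gap; split.
  - intros s Hs. apply (step_lt b Y' cj); auto; lra.
  - apply (step_eq b Y' cj); auto; lra.
Qed.

Lemma stepB b Y' cj a : 1 < b -> 0 <= Y' -> Gap b Y' cj ->
  INR a + 1 <= b * cj -> Gap b (b * Y' + INR a) 1.
Proof.
  intros Hb HY G Hle. unfold Gap; split.
  - intros s Hs. apply (step_lt b Y' cj); auto; lra.
  - destruct (Rle_lt_or_eq_dec _ _ Hle).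
    + apply (step_int b Y' cj); auto.
    + apply (step_eq b Y' cj); auto; lra.
Qed.

Lemma dstar_shift m t n x : dstar m t (n + x) = dstar m t (n mod m + x).
Proof. unfold dstar. rewrite Nat.Div0.add_mod_idemp_l. reflexivity. Qed.

Lemma dstar_small m t j : (1 <= j < m)%nat -> dstar m t j = t j.
Proof.
  intros H. unfold dstar. rewrite Nat.mod_small by lia.
  destruct (j =? 0)%nat eqn:E; auto. apply Nat.eqb_eq in E; lia.
Qed.

Lemma dstar_m m t : dstar m t m = 0%nat.
Proof. unfold dstar. rewrite Nat.Div0.mod_same. reflexivity. Qed.

Lemma G_mono b J u v : 1 < b -> u <= v ->
  (forall l, (l < J)%nat -> Int_part (b * Nat.iter l (Tb b) u) = Int_part (b * Nat.iter l (Tb b) v)) ->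
  Nat.iter J (Tb b) u <= Nat.iter J (Tb b) v.
Proof.
  intros Hb Huv. induction J; intros H; [simpl; auto|].
  change (Tb b (Nat.iter J (Tb b) u) <= Tb b (Nat.iter J (Tb b) v)).
  unfold Tb at 1 3. rewrite (H J) by lia.
  assert (Nat.iter J (Tb b) u <= Nat.iter J (Tb b) v) by (apply IHJ; intros; apply H; lia).
  nra.
Qed.

Lemma parry b m t : 1 < b -> renyi_one b m t -> (2 <= m)%nat -> t m = 1%nat ->
  forall n i, (1 <= n)%nat ->
  (forall l, (1 <= l <= i)%nat -> dstar m t (n + l) = dstar m t l) ->
  (dstar m t (n + (i + 1)) <= dstar m t (i + 1))%nat.
Proof.
  intros Hb HR Hm Htm n i Hn Hyp.
  rewrite dstar_shift. setoid_rewrite dstar_shift in Hyp.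
  set (r := n mod m) in *.
  assert (Hr : (r < m)%nat) by (apply Nat.mod_upper_bound; lia).
  destruct (Nat.eq_dec r 0) as [E|Hr0].
  { rewrite E. simpl. lia. }
  assert (Hdig : forall l, (r + l + 1 <= m)%nat ->
    Int_part (b * Nat.iter l (Tb b) (c b r)) = Z.of_nat (t (r + l + 1)%nat)).
  { intros l Hl. rewrite <- (c_floor b m t HR) by lia. unfold c. rewrite <- Nat.iter_add.
    f_equal. f_equal. f_equal. lia. }
  assert (Hdig1 : forall l, (l + 1 <= m)%nat ->
    Int_part (b * Nat.iter l (Tb b) 1) = Z.of_nat (t (l + 1)%nat)).
  { intros l Hl. rewrite <- (c_floor b m t HR) by lia. unfold c. f_equal. f_equal. f_equal. lia. }
  assert (Heq : forall l, (l + 1 <= i)%nat -> (r + l + 1 < m)%nat ->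
    Int_part (b * Nat.iter l (Tb b) (c b r)) = Int_part (b * Nat.iter l (Tb b) 1)).
  { intros l Hl1 Hl2. rewrite Hdig, Hdig1 by lia. f_equal.
    specialize (Hyp (l + 1)%nat ltac:(lia)).
    rewrite !dstar_small in Hyp by lia. rewrite <- Hyp. f_equal. lia. }
  assert (Hcr : c b r <= 1) by (pose proof (c_range b r ltac:(lia)); lra).
  destruct (le_lt_dec (m - r) i) as [Hi|Hi].
  - exfalso.
    set (J := (m - r - 1)%nat).
    pose proof (G_mono b J (c b r) 1 Hb Hcr) as HG.
    assert (Hle : Nat.iter J (Tb b) (c b r) <= Nat.iter J (Tb b) 1).
    { apply HG. intros l Hl. apply Heq; unfold J in Hl; lia. }
    apply (Rmult_le_compat_l b) in Hle; [|lra].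
    apply Int_part_mono in Hle. rewrite Hdig, Hdig1 in Hle by (unfold J; lia).
    replace (r + J + 1)%nat with m in Hle by (unfold J; lia).
    rewrite Htm in Hle.
    specialize (Hyp (m - r)%nat ltac:(lia)).
    replace (r + (m - r))%nat with m in Hyp by lia.
    rewrite dstar_m, dstar_small in Hyp by lia.
    replace (J + 1)%nat with (m - r)%nat in Hle by (unfold J; lia).
    rewrite <- Hyp in Hle. simpl in Hle. lia.
  - pose proof (G_mono b i (c b r) 1 Hb Hcr) as HG.
    assert (Hle : Nat.iter i (Tb b) (c b r) <= Nat.iter i (Tb b) 1).
    { apply HG. intros l Hl. apply Heq; lia. }
    apply (Rmult_le_compat_l b) in Hle; [|lra].
    apply Int_part_mono in Hle. rewrite Hdig, Hdig1 in Hle by lia.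
    destruct (Nat.eq_dec (r + (i + 1)) m) as [E|E].
    + rewrite E, dstar_m. lia.
    + rewrite !dstar_small by lia. replace (r + (i+1))%nat with (r + i + 1)%nat by lia. lia.
Qed.

Lemma pow_pos' b n : 1 < b -> 0 < b ^ n.
Proof. intros; apply pow_lt; lra. Qed.

Lemma exp_facts b y L ys : 1 < b -> beta_int_expansion b y L ys ->
  (0 <= y < b ^ L) /\ F b y = 0 /\
  (forall i, (i < L)%nat -> Int_part (b * F b (y / b ^ S i)) = Z.of_nat (ys i)).
Proof.
  intros Hb [[HL Hy] | [HL [[Hy1 Hy2] [Hd Hz]]]].
  - subst. split; [simpl; lra|]. split. apply F_small; lra. intros; lia.
  - pose proof (pow_pos' b (L - 1) Hb).
    split; [lra|]. split.
    + rewrite (F_Fr b L) by (auto; lra). exact Hz.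
    + intros i Hi. rewrite Hd by auto. f_equal. f_equal.
      assert (EL : b ^ L = b ^ (L - 1 - i) * b ^ S i) by (rewrite <- pow_add; f_equal; lia).
      pose proof (pow_pos' b (L - 1 - i) Hb). pose proof (pow_pos' b (S i) Hb).
      rewrite (F_Fr b (L - 1 - i)); auto.
      * unfold Fr. f_equal. rewrite EL. field. split; lra.
      * split. apply Rdiv_le_0_compat; lra.
        apply (Rmult_lt_reg_r (b ^ S i)); auto.
        replace (y / b ^ S i * b ^ S i) with y by (field; lra). lra.
Qed.

Lemma find_L b x : 1 < b -> 1 <= x -> forall N, x < b ^ N ->
  exists L, (0 < L)%nat /\ b ^ (L - 1) <= x < b ^ L.
Proof.
  intros Hb Hx. induction N; intros H. simpl in H; lra.
  destruct (Rlt_le_dec x (b ^ N)); auto.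
  exists (S N). split. lia. replace (S N - 1)%nat with N by lia. lra.
Qed.

Lemma Zplus_of_F b x : 1 < b -> 0 <= x -> F b x = 0 -> in_Zbeta_plus b x.
Proof.
  intros Hb Hx HF.
  destruct (Req_dec x 0) as [E|NE].
  { exists 0%nat, (fun _ => 0%nat). left. auto. }
  assert (Hx1 : 1 <= x).
  { destruct (Rlt_le_dec x 1); auto. rewrite F_small in HF; lra. }
  destruct (find_L b x Hb Hx1 (Nof b x) (Nof_spec b x Hb)) as [L [HL [H1 H2]]].
  exists L, (fun i => Z.to_nat (Int_part (b * Nat.iter (L - 1 - i) (Tb b) (x / b ^ L)))).
  right. split; auto. split; [lra|]. split.
  - intros i Hi. rewrite Z2Nat.id; auto. apply Int_part_ge0.
    assert (0 <= Nat.iter (L - 1 - i) (Tb b) (x / b ^ L)).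
    { destruct (L - 1 - i)%nat. simpl. apply Rdiv_le_0_compat; auto. apply pow_pos'; auto.
      simpl. apply Tb_range. }
    nra.
  - rewrite (F_Fr b L) in HF; auto.
Qed.

Definition Yf b y i := y / b ^ i - F b (y / b ^ i).


Lemma Yf_facts b y L ys : 1 < b -> beta_int_expansion b y L ys ->
  Yf b y L = 0 /\ Yf b y 0 = y /\ (forall i, 0 <= Yf b y i) /\
  (forall i, (i < L)%nat -> Yf b y i = b * Yf b y (S i) + INR (ys i)) /\
  (forall i cj, (i < L)%nat -> 0 < cj -> Gap b (Yf b y (S i)) cj -> INR (ys i) < b * cj).
Proof.
  intros Hb HE. destruct (exp_facts b y L ys Hb HE) as [[Hy0 HyL] [HF Hd]].
  assert (Hyi : forall i, 0 <= y / b ^ i) by (intros; apply Rdiv_le_0_compat; auto; apply pow_pos'; auto).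
  split.
  { unfold Yf. rewrite F_small; auto. lra. split; auto.
    pose proof (pow_pos' b L Hb). apply (Rmult_lt_reg_r (b ^ L)); auto.
    replace (y / b ^ L * b ^ L) with y by (field; lra). lra. }
  split.
  { unfold Yf. simpl. rewrite Rdiv_1_r, HF. lra. }
  split.
  { intros i. unfold Yf. pose proof (F_le b (y / b ^ i) Hb (Hyi i)). lra. }
  assert (Hsplit : forall i, y / b ^ i / b = y / b ^ S i).
  { intros i. pose proof (pow_pos' b i Hb). simpl. field. split; lra. }
  split.
  { intros i Hi. unfold Yf. rewrite (F_rec b (y / b ^ i)) by auto. rewrite Hsplit.
    unfold Tb. rewrite Hd by auto. rewrite <- INR_IZR_INZ.
    pose proof (pow_pos' b i Hb). replace (b ^ S i) with (b * b ^ i) by reflexivity.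
    field_simplify; try (split; lra). lra. }
  intros i cj Hi Hc [G1 G2].
  set (f := F b (y / b ^ S i)).
  assert (Hf : f < cj).
  { destruct (Rlt_le_dec f cj); auto. exfalso.
    pose proof (F_sub b (y / b ^ S i) (f - cj) Hb (Hyi (S i))) as HS.
    fold f in HS.
    unfold Yf in G2. fold f in G2. replace (y / b ^ S i - f + cj) with (y / b ^ S i - (f - cj)) in G2 by ring.
    rewrite HS in G2 by lra. lra. }
  pose proof (base_Int_part (b * f)) as [B _]. unfold f in B. rewrite Hd in B by auto. fold f in B.
  rewrite INR_IZR_INZ. nra.
Qed.

Lemma exists_max (P : nat -> Prop) B : P 0%nat -> (forall k, P k -> (k <= B)%nat) ->
  exists K, P K /\ forall k, P k -> (k <= K)%nat.
Proof.
  intros H0. induction B as [|B IH]; intros HB.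
  - exists 0%nat. split; auto.
  - destruct (classic (P (S B))) as [HP|HP].
    + exists (S B). auto.
    + apply IH. intros k Hk. specialize (HB k Hk).
      destruct (Nat.eq_dec k (S B)); [subst; contradiction | lia].
Qed.

Lemma mod_succ1 K m : (m <> 0)%nat -> (K mod m + 1 < m)%nat -> ((K + 1) mod m = K mod m + 1)%nat.
Proof.
  intros Hm H. pose proof (Nat.div_mod K m Hm).
  symmetry. apply (Nat.mod_unique _ _ (K / m)); lia.
Qed.

Lemma mod_succ2 K m : (m <> 0)%nat -> (K mod m + 1 = m)%nat -> ((K + 1) mod m = 0)%nat.
Proof.
  intros Hm H. pose proof (Nat.div_mod K m Hm).
  symmetry. apply (Nat.mod_unique _ _ (K / m + 1)); nia.
Qed.

Definition matchAt m t (ys : nat -> nat) L i K :=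
  (K <= L - i)%nat /\ forall l, (1 <= l <= K)%nat -> ys (i + K - l)%nat = dstar m t l.

Lemma mainQ b m t y L ys : 1 < b -> (2 <= m)%nat -> renyi_one b m t -> t m = 1%nat ->
  beta_int_expansion b y L ys ->
  forall d i, (i + d = L)%nat -> forall K, matchAt m t ys L i K ->
  (forall K2, matchAt m t ys L i K2 -> (K2 <= K)%nat) -> Gap b (Yf b y i) (c b (K mod m)).
Proof.
  intros Hb Hm HR Htm HE.
  destruct (Yf_facts b y L ys Hb HE) as [YL [Y0 [Yge [Yrec Ybnd]]]].
  induction d as [|d IH]; intros i Hi K HK Hmax.
  - replace i with L by lia. destruct HK as [HK _]. replace K with 0%nat by lia.
    rewrite Nat.Div0.mod_0_l, YL. apply Gap0; auto.
  - destruct (exists_max (matchAt m t ys L (S i)) (L - S i)) as [K1 [HK1 HK1max]].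
    { split. lia. intros; lia. }
    { intros k [Hk _]; auto. }
    set (j := (K1 mod m)%nat).
    assert (Hj : (j < m)%nat) by (apply Nat.mod_upper_bound; lia).
    pose proof (IH (S i) ltac:(lia) K1 HK1 HK1max) as G. fold j in G.
    set (a := ys i).
    assert (Ha : INR a < b * c b j) by (apply Ybnd; auto; try lia; apply (c_pos b m t); auto; lia).
    pose proof (c_rel b m t HR (j + 1) ltac:(lia)) as Hrel.
    replace (j + 1 - 1)%nat with j in Hrel by lia.
    assert (Hcr : 0 <= c b (j + 1) < 1) by (apply c_range; lia).
    rewrite Yrec by lia. fold a.
    destruct (Nat.eq_dec a (dstar m t (K1 + 1))) as [EA|EA].
    +
      assert (EK : K = (K1 + 1)%nat).
      { apply Nat.le_antisymm.
        - destruct K as [|K']; [lia|].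
          assert (matchAt m t ys L (S i) K').
          { destruct HK as [HK1' HK2]. split. lia.
            intros l Hl. rewrite <- (HK2 l) by lia. f_equal. lia. }
          apply HK1max in H. lia.
        - apply Hmax. destruct HK1 as [A1 A2]. split. lia.
          intros l Hl. destruct (Nat.eq_dec l (K1 + 1)) as [->|Hne].
          + replace (i + (K1 + 1) - (K1 + 1))%nat with i by lia. exact EA.
          + rewrite <- (A2 l) by lia. f_equal. lia. }
      subst K.
      destruct (Nat.lt_ge_cases (j + 1) m) as [Hlt|Hge].
      * rewrite mod_succ1 by lia.
        assert (Ed : dstar m t (K1 + 1) = t (j + 1)%nat).
        { unfold dstar. rewrite mod_succ1 by lia.
          rewrite (proj2 (Nat.eqb_neq _ 0)) by lia. reflexivity. }
        change (Gap b (b * Yf b y (S i) + INR a) (c b (j + 1))).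
        assert (0 < c b (j + 1)) by (apply (c_pos b m t); auto; lia).
        apply (stepA b _ (c b j)); auto. rewrite EA, Ed. exact Hrel.
        lra.
      * assert (Ejm : (j + 1 = m)%nat) by lia.
        rewrite mod_succ2 by lia. simpl c.
        assert (Ed : dstar m t (K1 + 1) = 0%nat).
        { unfold dstar. rewrite mod_succ2 by lia. reflexivity. }
        apply (stepB b _ (c b j)); auto.
        rewrite Ejm, Htm in Hrel. assert (c b m = 0) by (destruct HR; auto).
        rewrite EA, Ed. simpl. simpl in Hrel. lra.
    +
      assert (Hjm : (j + 1 < m)%nat).
      { destruct (Nat.lt_ge_cases (j + 1) m) as [Hlt|Hge]; auto. exfalso.
        assert (Ejm : (j + 1 = m)%nat) by lia.
        rewrite Ejm, Htm in Hrel. assert (c b m = 0) by (destruct HR; auto).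
        rewrite Ejm in Hcr.
        assert (a = 0%nat).
        { assert (INR a < INR 1) by lra. apply INR_lt in H0. lia. }
        apply EA. rewrite H0. unfold dstar. rewrite mod_succ2 by lia. reflexivity. }
      assert (Ed : dstar m t (K1 + 1) = t (j + 1)%nat).
      { unfold dstar. rewrite mod_succ1 by lia.
        rewrite (proj2 (Nat.eqb_neq _ 0)) by lia. reflexivity. }
      assert (Hat : (a < t (j + 1)%nat)%nat).
      { assert (INR a < INR (t (j + 1)%nat) + 1) by lra.
        assert (INR a < INR (t (j + 1)%nat + 1)) by (rewrite plus_INR; simpl; lra).
        apply INR_lt in H0. rewrite Ed in EA. lia. }
      assert (EK : K = 0%nat).
      { destruct K as [|K']; auto. exfalso.
        assert (HM' : matchAt m t ys L (S i) K').
        { destruct HK as [HK1' HK2]. split. lia.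
          intros l Hl. rewrite <- (HK2 l) by lia. f_equal. lia. }
        assert (Hle := HK1max _ HM').
        assert (HaK : a = dstar m t (S K')).
        { destruct HK as [_ HK2]. unfold a. rewrite <- (HK2 (S K')) by lia. f_equal. lia. }
        destruct (Nat.eq_dec K' K1) as [->|Hne].
        { apply EA. rewrite HaK. f_equal. lia. }
        pose proof (parry b m t Hb HR Hm Htm (K1 - K') K' ltac:(lia)) as HP.
        assert (Hp : forall l, (1 <= l <= K')%nat -> dstar m t (K1 - K' + l) = dstar m t l).
        { intros l Hl. destruct HK1 as [_ A2]. destruct HM' as [_ B2].
          rewrite <- (A2 (K1 - K' + l)%nat) by lia. rewrite <- (B2 l) by lia. f_equal. lia. }
        specialize (HP Hp). replace (K1 - K' + (K' + 1))%nat with (K1 + 1)%nat in HP by lia.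
        replace (K' + 1)%nat with (S K') in HP by lia. rewrite <- HaK, Ed in HP. lia. }
      subst K. rewrite Nat.Div0.mod_0_l. simpl c.
      apply (stepB b _ (c b j)); auto.
      assert (INR (a + 1) <= INR (t (j + 1)%nat)) by (apply le_INR; lia).
      rewrite plus_INR in H. simpl in H. lra.
Qed.

Theorem mainTheorem16 (beta : R) (m : nat) (t : nat -> nat)
  (y : R) (L : nat) (ys : nat -> nat) (k : nat) :
  1 < beta ->
  (2 <= m)%nat ->
  renyi_one beta m t ->
  (1 <= t 1%nat)%nat ->
  t m = 1%nat ->
  beta_int_expansion beta y L ys ->
  (k <= L)%nat ->
  suffix_is_dstar_prefix m t ys k ->
  (forall k2 : nat, (k2 <= L)%nat -> suffix_is_dstar_prefix m t ys k2 -> (k2 <= k)%nat) ->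
  is_succ beta y (y + Nat.iter (Nat.modulo k m) (Tb beta) 1).
Proof.
  intros Hb Hm HR Ht1 Htm HE HkL Hsuf Hmax.
  destruct (Yf_facts beta y L ys Hb HE) as [_ [Y0 [Yge _]]].
  assert (HG : Gap beta (Yf beta y 0) (c beta (k mod m))).
  { apply (mainQ beta m t y L ys Hb Hm HR Htm HE L 0 ltac:(lia)).
    - split. lia. intros l Hl. rewrite <- Hsuf by lia. f_equal.
    - intros K2 [A B]. apply Hmax. lia. intros l Hl. rewrite <- B by lia. f_equal. }
  rewrite Y0 in HG. destruct HG as [G1 G2].
  assert (Hy : 0 <= y) by (specialize (Yge 0%nat); rewrite Y0 in Yge; exact Yge).
  assert (Hc : 0 < c beta (k mod m)) by (apply (c_pos beta m t); auto; try lia; apply Nat.mod_upper_bound; lia).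
  change (Nat.iter (k mod m) (Tb beta) 1) with (c beta (k mod m)).
  split; [|split].
  - left. apply Zplus_of_F; auto. lra.
  - lra.
  - intros z Hz Hyz. destruct (Rlt_le_dec z (y + c beta (k mod m))) as [Hlt|]; auto.
    exfalso. destruct Hz as [Hz|Hz].
    + destruct Hz as [L' [ys' HE']]. destruct (exp_facts beta z L' ys' Hb HE') as [_ [HF _]].
      specialize (G1 (z - y) ltac:(lra)). replace (y + (z - y)) with z in G1 by ring. lra.
    + destruct Hz as [L' [ys' HE']]. destruct (exp_facts beta (- z) L' ys' Hb HE') as [[H0 _] _]. lra.
Qed.
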